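(* Let $d\ge1$ and let $f:\mathbb{R}^d\setminus\{0\}\to\mathbb{R}$ be differentiable and scale-invariant ($f(c\mathbf{w})=f(\mathbf{w})$ for all $\mathbf{w}\ne0$, $c>0$). Fix $\eta>0$, $\beta\in[0,1)$ and $\mathbf{w}_0\neq 0$. Let $(\mathbf{w}^{\mathrm{GD}}_t)_{t\ge0}$ be the vanilla gradient descent iterates $\mathbf{w}^{\mathrm{GD}}_0=\mathbf{w}_0$, $\mathbf{w}^{\mathrm{GD}}_{t+1}=\mathbf{w}^{\mathrm{GD}}_t-\eta\nabla f(\mathbf{w}^{\mathrm{GD}}_t)$, and let $(\mathbf{w}^{\mathrm{GDM}}_t)_{t\ge0}$ be the momentum gradient descent iterates $\mathbf{w}^{\mathrm{GDM}}_0=\mathbf{w}_0$, $\mathbf{p}_{-1}=0$, $\mathbf{p}_t=\beta\mathbf{p}_{t-1}+\nabla f(\mathbf{w}^{\mathrm{GDM}}_t)$, $\mathbf{w}^{\mathrm{GDM}}_{t+1}=\mathbf{w}^{\mathrm{GDM}}_t-\eta\mathbf{p}_t$ (all iterates assumed nonzero). Assume that the update norms of the two methods coincide, i.e. $\|\nabla f(\mathbf{w}^{\mathrm{GD}}_t)\|_2=\|\mathbf{p}_t\|_2$ for every $t\ge0$, and that $0<\sum_{t\ge0}\|\mathbf{p}_t\|_2^2<\infty$. Then $$\frac{\|\mathbf{w}_t^{\mathrm{GDM}}\|_2^2-\|\mathbf{w}_0\|_2^2}{\|\mathbf{w}_t^{\mathrm{GD}}\|_2^2-\|\mathbf{w}_0\|_2^2}\longrightarrow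 1+\frac{2\beta}{1-\beta}\quad\text{as } t\to\infty.$$
   Context: For scale-invariant differentiable $f$, $\mathbf{w}\cdot\nabla f(\mathbf{w})=0$, so vanilla gradient descent satisfies $\|\mathbf{w}^{\mathrm{GD}}_{t+1}\|_2^2=\|\mathbf{w}^{\mathrm{GD}}_t\|_2^2+\eta^2\|\nabla f(\mathbf{w}^{\mathrm{GD}}_t)\|_2^2$. The ratio is considered for $t$ large enough that the denominator is positive. *)

(* Defs.v *)
From HB Require Import structures.
From mathcomp Require Import all_boot all_order all_algebra.
From mathcomp Require Import all_classical all_reals all_analysis.
Set Implicit Arguments. Unset Strict Implicit. Unset Printing Implicit Defensive.
Import Order.TTheory GRing.Theory Num.Theory.
Import numFieldNormedType.Exports.
Local Open Scope ring_scope.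

Definition sqnorm {R : realType} {d : nat} (v : 'rV[R]_d) : R :=
  \sum_(i < d) v 0 i ^+ 2.

Definition norm2 {R : realType} {d : nat} (v : 'rV[R]_d) : R :=
  Num.sqrt (sqnorm v).

Definition grad {R : realType} {d : nat} (f : 'rV[R]_d -> R) (w : 'rV[R]_d)
  : 'rV[R]_d :=
  \row_(i < d) ('D_(delta_mx 0 i) f w).

(* Main.v *)
Require Import Defs.
From HB Require Import structures.
From mathcomp Require Import all_boot all_order all_algebra.
From mathcomp Require Import all_classical all_reals all_analysis.
From mathcomp Require Import ring lra.
Import Order.TTheory GRing.Theory Num.Theory.
Import numFieldNormedType.Exports.
Local Open Scope classical_set_scope.
Local Open Scope ring_scope.

Lemma Dww0 (R : realType) (d : nat) (f : 'rV[R]_d -> R) (w : 'rV[R]_d) :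
  (forall c : R, 0 < c -> f (c *: w) = f w) -> 'D_w f w = 0.
Proof.
move=> sc; rewrite /derive; apply: norm_lim_near_cst.
near=> h.
rewrite /= -{2}(scale1r w) -scalerDl sc ?subrr ?scaler0 //.
have : `|h| < 1 by near: h; apply: dnbhs0_lt.
rewrite ltr_norml => /andP[h1 _]; lra.
Unshelve. all: by end_near.
Qed.
Definition dot {R : realType} {d : nat} (u v : 'rV[R]_d) : R := \sum_(i < d) u 0 i * v 0 i.
Lemma dot_grad (R : realType) (d : nat) (f : 'rV[R]_d -> R) (w : 'rV[R]_d) :
  differentiable f w -> dot w (grad f w) = 'D_w f w.
Proof.
move=> df; rewrite /dot /grad deriveE //.
have L := linear_sum ('d f w) (index_enum 'I_d) xpredT (fun j => w 0 j *: delta_mx 0 j).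
rewrite -row_sum_delta in L.
rewrite L; apply: eq_bigr => i _; rewrite mxE deriveE // linearZ.
done.
Qed.
Lemma sqnormB (R : realType) (d : nat) (u v : 'rV[R]_d) (a : R) :
  sqnorm (u - a *: v) = sqnorm u - 2 * a * dot u v + a ^+ 2 * sqnorm v.
Proof.
rewrite /sqnorm /dot mulr_sumr mulr_sumr -sumrN -!big_split /=.
by apply: eq_bigr => i _; rewrite !mxE; ring.
Qed.
Lemma dotDr (R : realType) (d : nat) (u v g : 'rV[R]_d) (a : R) :
  dot u (a *: v + g) = a * dot u v + dot u g.
Proof.
rewrite /dot mulr_sumr -!big_split /=.
by apply: eq_bigr => i _; rewrite !mxE; ring.
Qed.
Lemma dotBl (R : realType) (d : nat) (u v : 'rV[R]_d) (a : R) :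
  dot (u - a *: v) v = dot u v - a * sqnorm v.
Proof.
rewrite /dot /sqnorm mulr_sumr -sumrN -!big_split /=.
by apply: eq_bigr => i _; rewrite !mxE; ring.
Qed.
Lemma sqnorm_ge0 (R : realType) (d : nat) (u : 'rV[R]_d) : 0 <= sqnorm u.
Proof. by apply: sumr_ge0 => i _; rewrite sqr_ge0. Qed.
Lemma sqnorm_eq (R : realType) (d : nat) (u v : 'rV[R]_d) :
  norm2 u = norm2 v -> sqnorm u = sqnorm v.
Proof.
move=> h; rewrite -(sqr_sqrtr (sqnorm_ge0 _ _ u)) -(sqr_sqrtr (sqnorm_ge0 _ _ v)).
by move: h; rewrite /norm2 => ->.
Qed.
Lemma seriesS (R : realType) (u : nat -> R) n : series u n.+1 = series u n + u n.
Proof. by rewrite /series /= big_nat_recr. Qed.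
Fixpoint Cseq (R : realType) (b : R) (q : nat -> R) (n : nat) : R :=
  match n with 0 => 0 | m.+1 => b * (Cseq R b q m + q m) end.
Theorem mainTheorem2 (R : realType) (d : nat) (f : 'rV[R]_d -> R)
    (eta beta : R) (w0 : 'rV[R]_d)
    (wGD wGDM p : nat -> 'rV[R]_d) :
  (0 < d)%N ->
  (forall w : 'rV[R]_d, w != 0 -> differentiable f w) ->
  (forall (w : 'rV[R]_d) (c : R), w != 0 -> 0 < c -> f (c *: w) = f w) ->
  0 < eta -> 0 <= beta -> beta < 1 ->
  w0 != 0 ->
  wGD 0%N = w0 ->
  (forall t : nat, wGD t.+1 = wGD t - eta *: grad f (wGD t)) ->
  wGDM 0%N = w0 ->
  p 0%N = grad f (wGDM 0%N) ->
  (forall t : nat, p t.+1 = beta *: p t + grad f (wGDM t.+1)) ->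
  (forall t : nat, wGDM t.+1 = wGDM t - eta *: p t) ->
  (forall t : nat, wGD t != 0) ->
  (forall t : nat, wGDM t != 0) ->
  (forall t : nat, norm2 (grad f (wGD t)) = norm2 (p t)) ->
  cvgn (series (fun t => sqnorm (p t))) ->
  0 < limn (series (fun t => sqnorm (p t))) ->
  (fun t => (sqnorm (wGDM t) - sqnorm w0) / (sqnorm (wGD t) - sqnorm w0))
    @ \oo --> 1 + 2 * beta / (1 - beta).
Proof.
move=> _ hdiff hsc eta0 b0 b1 _ GD0 GDS GDM0 p0 pS GDMS GDnz GDMnz hnorm hS L0.
set q := fun t => sqnorm (p t).
set S := series q.
set L := limn S.
set C := Cseq R beta q.
set D := series C.
have orth : forall w, w != 0 -> dot w (grad f w) = 0.
  move=> w wnz; rewrite dot_grad; last exact: hdiff.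
  apply: Dww0 => c c0; exact: hsc.
have q0 : forall t, 0 <= q t by move=> t; exact: sqnorm_ge0.
have hGD : forall t, sqnorm (wGD t) - sqnorm w0 = eta ^+ 2 * S t.
  elim=> [|t IH]; first by rewrite GD0 subrr /S /series /= big_geq // mulr0.
  rewrite GDS sqnormB orth // (sqnorm_eq _ _ _ _ (hnorm t)) /S seriesS.
  rewrite -/S; move: IH; rewrite /q; lra.
have ha : forall t, dot (wGDM t) (p t) = - eta * C t.
  elim=> [|t IH]; first by rewrite p0 orth // /C /= mulr0.
  rewrite pS dotDr orth // GDMS dotBl IH /C /= -/C /q; ring.
have hGDM : forall t, sqnorm (wGDM t) - sqnorm w0 = eta ^+ 2 * (S t + 2 * D t).
  elim=> [|t IH]; first by rewrite GDM0 subrr /S /D /series /= !big_geq //; ring.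
  rewrite GDMS sqnormB ha /S /D !seriesS -/S -/D.
  move: IH; rewrite /q; lra.
have C0 : forall t, 0 <= C t.
  elim=> [|t IH] //=; rewrite /C /= -/C; apply: mulr_ge0 => //; exact: addr_ge0.
have hid : forall t, (1 - beta) * D t = beta * S t - C t.
  elim=> [|t IH]; first by rewrite /S /D /series /= !big_geq // mulr0 mulr0 subr0.
  rewrite /S /D !seriesS -/S -/D /C /= -/C; move: IH; lra.
have Snd : {homo S : n m / (n <= m)%N >-> n <= m}.
  apply/nondecreasing_seqP => n; rewrite /S seriesS lerDl; exact: q0.
have SL : forall t, S t <= L by exact: nondecreasing_cvgn_le.
have Dnd : {homo D : n m / (n <= m)%N >-> n <= m}.
  apply/nondecreasing_seqP => n; rewrite /D seriesS lerDl; exact: C0.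
have DB : forall t, D t <= beta * L / (1 - beta).
  move=> t; rewrite ler_pdivlMr ?subr_gt0 // mulrC hid.
  have := SL t; have := C0 t; nra.
have hD : cvgn D.
  apply: nondecreasing_is_cvgn => //; exists (beta * L / (1 - beta)) => _ [t _ <-]; exact: DB.
have hC : C @ \oo --> 0 by exact: cvg_series_cvg_0.
have hD' : D @ \oo --> (beta * L - 0) / (1 - beta).
  have -> : D = (fun t => (beta * S t - C t) / (1 - beta)).
    apply/funext => t; rewrite -hid; field; lra.
  apply: cvgMl; apply: cvgB => //; apply: cvgMr; exact: hS.
have hN : (fun t => S t + 2 * D t) @ \oo --> L + 2 * ((beta * L - 0) / (1 - beta)).
  apply: cvgD; first exact: hS.
  by apply: cvgMr.
have Lne : L != 0 by rewrite gt_eqF.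
have hV : (fun t => (S t)^-1) @ \oo --> L^-1 by apply: cvgV.
have hM := cvgM hN hV.
move: hM.
have -> : 1 + 2 * beta / (1 - beta) = (L + 2 * ((beta * L - 0) / (1 - beta))) * L^-1.
  field; apply/andP; split => //; lra.
have -> : (fun t => (sqnorm (wGDM t) - sqnorm w0) / (sqnorm (wGD t) - sqnorm w0))
  = (fun t => (S t + 2 * D t) * (S t)^-1).
  apply/funext => t; rewrite hGD hGDM invfM mulrACA.
  rewrite mulfV ?mul1r //; rewrite expf_eq0 /=; lra.
move=> hM; exact: hM.
Qed.
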